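(* If $M\Rrightarrow N_1$ and $M\Rrightarrow N_2$, then there exists $N$ such that $N_1\Rrightarrow N$ and $N_2\Rrightarrow N$.
   Context: Terms of $\lambda^{\triangleright}$: transition variables $\alpha,\beta,\dots$; a transition $A,B$ is a finite sequence of transition variables ($\varepsilon$ empty, $AB$ concatenation). Types $\tau ::= b \mid \tau\to\tau \mid \triangleright_\alpha\tau \mid \forall\alpha.\tau$. Terms $M ::= x \mid M\,M \mid \lambda x{:}\tau.M \mid \blacktriangleright_\alpha M \mid \blacktriangleleft_\alpha M \mid \Lambda\alpha.M \mid M\,A$ (quotation, unquotation, transition abstraction, instantiation by a transition); $x$ is bound in $\lambda x{:}\tau.M$ and $\alpha$ in $\Lambda\alpha.M$. For $A=\alpha_1\cdots\alpha_n$: $\blacktriangleright_A M=\blacktriangleright_{\alpha_1}\cdots\blacktriangleright_{\alpha_n}M$, $\blacktriangleleft_A M=\blacktriangleleft_{\alpha_n}\cdots\blacktriangleleft_{\alpha_1}M$ (identity when $A=\varepsilon$), and similarly $\triangleright_A\tau$. $M[x:=N]$ is capture-avoiding term substitution; $M[\alpha:=B]$ is capture-avoiding substitution of a transition $B$ for $\alpha$, replacing $\alpha$ by $B$ in transitions and $\triangleright_\alpha,\blacktriangleright_\alpha,\blacktriangleleft_\alpha$ by $\triangleright_B,\blacktriangleright_B,\blacktriangleleft_B$. Parallel reduction $M\Rrightarrow N$ is inductively defined by: $x\Rrightarrow x$; $M\Rrightarrow N\Rightarrow \lambda x{:}\tau.M\Rrightarrow\lambda x{:}\tau.N$; $M_1\Rrightarrow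 N_1, M_2\Rrightarrow N_2\Rightarrow M_1M_2\Rrightarrow N_1N_2$; $M_1\Rrightarrow N_1, M_2\Rrightarrow N_2\Rightarrow(\lambda x{:}\tau.M_1)M_2\Rrightarrow N_1[x:=N_2]$; $M\Rrightarrow N\Rightarrow\Lambda\alpha.M\Rrightarrow\Lambda\alpha.N$; $M\Rrightarrow N\Rightarrow M\,A\Rrightarrow N\,A$; $M\Rrightarrow N\Rightarrow(\Lambda\alpha.M)\,A\Rrightarrow N[\alpha:=A]$; $M\Rrightarrow N\Rightarrow\blacktriangleright_\alpha M\Rrightarrow\blacktriangleright_\alpha N$; $M\Rrightarrow N\Rightarrow\blacktriangleleft_\alpha M\Rrightarrow\blacktriangleleft_\alpha N$; and, for any transition $A$, $M\Rrightarrow N\Rightarrow\blacktriangleleft_A\blacktriangleright_A M\Rrightarrow N$. *)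

(* Defs.v *)
(* Syntax of lambda^triangleright with de Bruijn indices:
   term variables and transition variables live in two separate index
   namespaces.  Lam binds term index 0; TLam (Lambda alpha) and TAll bind
   transition index 0. *)
From Stdlib Require Import List Arith.
Import ListNotations.

Definition tvar := nat.
Definition transition := list tvar.

Inductive ty : Type :=
| TBase  : nat -> ty
| TArr   : ty -> ty -> ty
| TLater : tvar -> ty -> ty
| TAll   : ty -> ty.

Inductive tm : Type :=
| Var     : nat -> tm
| App     : tm -> tm -> tm
| Lam     : ty -> tm -> tm
| Quote   : tvar -> tm -> tm
| Unquote : tvar -> tm -> tm
| TLam    : tm -> tm
| TApp    : tm -> transition -> tm.

Definition later_seq (A : transition) (t : ty) : ty :=
  fold_right TLater t A.
Definition quote_seq (A : transition) (M : tm) : tm :=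
  fold_right Quote M A.
(* black<|_A M = black<|_an ... black<|_a1 M *)
Definition unquote_seq (A : transition) (M : tm) : tm :=
  fold_left (fun acc a => Unquote a acc) A M.

Definition tshift_var (c i : nat) : nat := if i <? c then i else S i.
Definition tshift_trans (c : nat) (A : transition) : transition :=
  map (tshift_var c) A.

Fixpoint tshift_ty (c : nat) (t : ty) : ty :=
  match t with
  | TBase b => TBase b
  | TArr t1 t2 => TArr (tshift_ty c t1) (tshift_ty c t2)
  | TLater a t1 => TLater (tshift_var c a) (tshift_ty c t1)
  | TAll t1 => TAll (tshift_ty (S c) t1)
  end.

Fixpoint tshift_tm (c : nat) (M : tm) : tm :=
  match M with
  | Var x => Var x
  | App M1 M2 => App (tshift_tm c M1) (tshift_tm c M2)
  | Lam t M1 => Lam (tshift_ty c t) (tshift_tm c M1)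
  | Quote a M1 => Quote (tshift_var c a) (tshift_tm c M1)
  | Unquote a M1 => Unquote (tshift_var c a) (tshift_tm c M1)
  | TLam M1 => TLam (tshift_tm (S c) M1)
  | TApp M1 A => TApp (tshift_tm c M1) (tshift_trans c A)
  end.

Fixpoint shift_tm (c : nat) (M : tm) : tm :=
  match M with
  | Var x => Var (if x <? c then x else S x)
  | App M1 M2 => App (shift_tm c M1) (shift_tm c M2)
  | Lam t M1 => Lam t (shift_tm (S c) M1)
  | Quote a M1 => Quote a (shift_tm c M1)
  | Unquote a M1 => Unquote a (shift_tm c M1)
  | TLam M1 => TLam (shift_tm c M1)
  | TApp M1 A => TApp (shift_tm c M1) A
  end.

Definition tsubst_var (k : nat) (B : transition) (i : nat) : transition :=
  if i =? k then B else if k <? i then [pred i] else [i].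
Definition tsubst_trans (k : nat) (B : transition) (A : transition) : transition :=
  flat_map (tsubst_var k B) A.

Fixpoint tsubst_ty (k : nat) (B : transition) (t : ty) : ty :=
  match t with
  | TBase b => TBase b
  | TArr t1 t2 => TArr (tsubst_ty k B t1) (tsubst_ty k B t2)
  | TLater a t1 => later_seq (tsubst_var k B a) (tsubst_ty k B t1)
  | TAll t1 => TAll (tsubst_ty (S k) (tshift_trans 0 B) t1)
  end.

Fixpoint tsubst_tm (k : nat) (B : transition) (M : tm) : tm :=
  match M with
  | Var x => Var x
  | App M1 M2 => App (tsubst_tm k B M1) (tsubst_tm k B M2)
  | Lam t M1 => Lam (tsubst_ty k B t) (tsubst_tm k B M1)
  | Quote a M1 => quote_seq (tsubst_var k B a) (tsubst_tm k B M1)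
  | Unquote a M1 => unquote_seq (tsubst_var k B a) (tsubst_tm k B M1)
  | TLam M1 => TLam (tsubst_tm (S k) (tshift_trans 0 B) M1)
  | TApp M1 A => TApp (tsubst_tm k B M1) (tsubst_trans k B A)
  end.

Fixpoint subst_tm (k : nat) (N : tm) (M : tm) : tm :=
  match M with
  | Var x => if x =? k then N else if k <? x then Var (pred x) else Var x
  | App M1 M2 => App (subst_tm k N M1) (subst_tm k N M2)
  | Lam t M1 => Lam t (subst_tm (S k) (shift_tm 0 N) M1)
  | Quote a M1 => Quote a (subst_tm k N M1)
  | Unquote a M1 => Unquote a (subst_tm k N M1)
  | TLam M1 => TLam (subst_tm k (tshift_tm 0 N) M1)
  | TApp M1 A => TApp (subst_tm k N M1) A
  end.

Definition subst0 (M N : tm) : tm := subst_tm 0 N M.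
Definition tsubst0 (M : tm) (A : transition) : tm := tsubst_tm 0 A M.

Inductive par : tm -> tm -> Prop :=
| par_var : forall x, par (Var x) (Var x)
| par_lam : forall t M N, par M N -> par (Lam t M) (Lam t N)
| par_app : forall M1 N1 M2 N2, par M1 N1 -> par M2 N2 ->
    par (App M1 M2) (App N1 N2)
| par_beta : forall t M1 N1 M2 N2, par M1 N1 -> par M2 N2 ->
    par (App (Lam t M1) M2) (subst0 N1 N2)
| par_tlam : forall M N, par M N -> par (TLam M) (TLam N)
| par_tapp : forall M N A, par M N -> par (TApp M A) (TApp N A)
| par_tbeta : forall M N A, par M N -> par (TApp (TLam M) A) (tsubst0 N A)
| par_quote : forall a M N, par M N -> par (Quote a M) (Quote a N)
| par_unquote : forall a M N, par M N -> par (Unquote a M) (Unquote a N)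
| par_cancel : forall A M N, par M N ->
    par (unquote_seq A (quote_seq A M)) N.

Notation "M ⇛ N" := (par M N) (at level 70).

(* Main.v *)
Require Import Defs.
From Stdlib Require Import Classical.
From Stdlib Require Import List Arith Lia.
Import ListNotations.

Lemma map_flat_map {X Y Z} (f : Y -> Z) (g : X -> list Y) l :
  map f (flat_map g l) = flat_map (fun x => map f (g x)) l.
Proof. induction l; simpl; auto. rewrite map_app, IHl; auto. Qed.
Lemma flat_map_map {X Y Z} (f : Y -> list Z) (g : X -> Y) l :
  flat_map f (map g l) = flat_map (fun x => f (g x)) l.
Proof. induction l; simpl; auto. rewrite IHl; auto. Qed.
Lemma flat_map_flat_map {X Y Z} (f : Y -> list Z) (g : X -> list Y) l :
  flat_map f (flat_map g l) = flat_map (fun x => flat_map f (g x)) l.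
Proof. induction l; simpl; auto. rewrite flat_map_app, IHl; auto. Qed.

Local Arguments Nat.eqb : simpl never.
Local Arguments Nat.ltb : simpl never.
Local Arguments Nat.leb : simpl never.
Ltac vs := unfold tshift_var, tsubst_var, tsubst_trans, tshift_trans in *;
  repeat (match goal with
  | |- context [?a <? ?b] => destruct (Nat.ltb_spec a b)
  | |- context [?a =? ?b] => destruct (Nat.eqb_spec a b)
  end; simpl in *; unfold tshift_var, tsubst_var in * ); try (f_equal; lia); try lia.

Lemma T1v c d i : c <= d -> tshift_var (S d) (tshift_var c i) = tshift_var c (tshift_var d i).
Proof. intros; vs. Qed.
Lemma T4v k Y i : tsubst_var k Y (tshift_var k i) = [i].
Proof. vs. Qed.
Lemma T2v k c B i : k <= c -> tshift_trans c (tsubst_var k B i) = tsubst_var k (tshift_trans c B) (tshift_var (S c) i).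
Proof. intros; unfold tsubst_var; vs. Qed.
Lemma T2'v k c B i : c <= k -> tshift_trans c (tsubst_var k B i) = tsubst_var (S k) (tshift_trans c B) (tshift_var c i).
Proof. intros; unfold tsubst_var; vs. Qed.

Lemma T1 c d A : c <= d -> tshift_trans (S d) (tshift_trans c A) = tshift_trans c (tshift_trans d A).
Proof. intros; unfold tshift_trans; rewrite !map_map; apply map_ext; intros; apply T1v; auto. Qed.
Lemma T4 k Y A : tsubst_trans k Y (tshift_trans k A) = A.
Proof. unfold tsubst_trans, tshift_trans. rewrite flat_map_map.
  induction A; simpl; auto. rewrite T4v, IHA; auto. Qed.
Lemma T2 k c B A : k <= c -> tshift_trans c (tsubst_trans k B A) = tsubst_trans k (tshift_trans c B) (tshift_trans (S c) A).
Proof. intros; unfold tsubst_trans. unfold tshift_trans at 1 3. rewrite map_flat_map, flat_map_map.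
  apply flat_map_ext; intros; apply T2v; auto. Qed.
Lemma T2' k c B A : c <= k -> tshift_trans c (tsubst_trans k B A) = tsubst_trans (S k) (tshift_trans c B) (tshift_trans c A).
Proof. intros; unfold tsubst_trans. unfold tshift_trans at 1 3. rewrite map_flat_map, flat_map_map.
  apply flat_map_ext; intros; apply T2'v; auto. Qed.

Lemma ts_single k B i : tsubst_trans k B [i] = tsubst_var k B i.
Proof. unfold tsubst_trans; simpl; rewrite app_nil_r; auto. Qed.

Lemma T3v j k A B i : j <= k ->
  tsubst_trans k B (tsubst_var j A i) = tsubst_trans j (tsubst_trans k B A) (tsubst_var (S k) (tshift_trans j B) i).
Proof. intros. unfold tsubst_var at 1 2.
  destruct (Nat.eqb_spec i j).
  - subst. destruct (Nat.eqb_spec j (S k)); [lia|]. destruct (Nat.ltb_spec (S k) j); [lia|].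
    rewrite ts_single. unfold tsubst_var. rewrite Nat.eqb_refl; auto.
  - destruct (Nat.ltb_spec j i).
    + rewrite ts_single. destruct (Nat.eqb_spec i (S k)).
      * subst. simpl. unfold tsubst_var. rewrite Nat.eqb_refl. rewrite T4; auto.
      * destruct (Nat.ltb_spec (S k) i); rewrite ts_single; unfold tsubst_var; vs.
    + rewrite ts_single. destruct (Nat.eqb_spec i (S k)); [lia|].
      destruct (Nat.ltb_spec (S k) i); [lia|]. rewrite ts_single. unfold tsubst_var; vs.
Qed.

Lemma T3 j k A B X : j <= k ->
  tsubst_trans k B (tsubst_trans j A X) = tsubst_trans j (tsubst_trans k B A) (tsubst_trans (S k) (tshift_trans j B) X).
Proof. intros. unfold tsubst_trans at 1 2 3 5. rewrite !flat_map_flat_map.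
  apply flat_map_ext; intros. apply T3v; auto. Qed.
Lemma later_seq_tshift c A t : tshift_ty c (later_seq A t) = later_seq (tshift_trans c A) (tshift_ty c t).
Proof. induction A; simpl; auto. rewrite IHA; auto. Qed.
Lemma later_seq_app A B t : later_seq (A ++ B) t = later_seq A (later_seq B t).
Proof. unfold later_seq; apply fold_right_app. Qed.
Lemma later_seq_tsubst k B A t : tsubst_ty k B (later_seq A t) = later_seq (tsubst_trans k B A) (tsubst_ty k B t).
Proof. induction A; simpl; auto. rewrite IHA, later_seq_app. unfold tsubst_trans; simpl. auto. Qed.

Lemma quote_seq_app A B M : quote_seq (A ++ B) M = quote_seq A (quote_seq B M).
Proof. unfold quote_seq; apply fold_right_app. Qed.
Lemma unquote_seq_app A B M : unquote_seq (A ++ B) M = unquote_seq B (unquote_seq A M).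
Proof. unfold unquote_seq; apply fold_left_app. Qed.
Lemma unquote_seq_cons a A M : unquote_seq (a :: A) M = unquote_seq A (Unquote a M).
Proof. reflexivity. Qed.

Lemma quote_seq_tshift c A M : tshift_tm c (quote_seq A M) = quote_seq (tshift_trans c A) (tshift_tm c M).
Proof. induction A; simpl; auto. rewrite IHA; auto. Qed.
Lemma unquote_seq_tshift c A M : tshift_tm c (unquote_seq A M) = unquote_seq (tshift_trans c A) (tshift_tm c M).
Proof. revert M; induction A; intros; simpl; auto; rewrite IHA; auto. Qed.
Lemma quote_seq_tsubst k B A M : tsubst_tm k B (quote_seq A M) = quote_seq (tsubst_trans k B A) (tsubst_tm k B M).
Proof. induction A; simpl; auto. rewrite IHA, quote_seq_app. unfold tsubst_trans; simpl. auto. Qed.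
Lemma unquote_seq_tsubst k B A M : tsubst_tm k B (unquote_seq A M) = unquote_seq (tsubst_trans k B A) (tsubst_tm k B M).
Proof. revert M; induction A; intros; auto.
  change (unquote_seq (a::A) M) with (unquote_seq A (Unquote a M)). rewrite IHA.
  replace (tsubst_trans k B (a :: A)) with (tsubst_var k B a ++ tsubst_trans k B A) by reflexivity.
  rewrite unquote_seq_app. reflexivity. Qed.
Lemma quote_seq_shift c A M : shift_tm c (quote_seq A M) = quote_seq A (shift_tm c M).
Proof. induction A; simpl; auto. rewrite IHA; auto. Qed.
Lemma unquote_seq_shift c A M : shift_tm c (unquote_seq A M) = unquote_seq A (shift_tm c M).
Proof. revert M; induction A; intros; simpl; auto; rewrite IHA; auto. Qed.
Lemma quote_seq_subst k N A M : subst_tm k N (quote_seq A M) = quote_seq A (subst_tm k N M).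
Proof. induction A; simpl; auto. rewrite IHA; auto. Qed.
Lemma unquote_seq_subst k N A M : subst_tm k N (unquote_seq A M) = unquote_seq A (subst_tm k N M).
Proof. revert M; induction A; intros; simpl; auto; rewrite IHA; auto. Qed.

Local Arguments later_seq : simpl never.
Local Arguments quote_seq : simpl never.
Local Arguments unquote_seq : simpl never.
Lemma T1ty t : forall c d, c <= d -> tshift_ty (S d) (tshift_ty c t) = tshift_ty c (tshift_ty d t).
Proof. induction t; intros; simpl; f_equal; auto; try apply T1v; auto; try (apply IHt; lia). Qed.
Lemma T4ty t : forall k Y, tsubst_ty k Y (tshift_ty k t) = t.
Proof. induction t; intros; simpl; try rewrite T4v; unfold later_seq; simpl; f_equal; auto. Qed.
Lemma T2ty t : forall k c B, k <= c -> tshift_ty c (tsubst_ty k B t) = tsubst_ty k (tshift_trans c B) (tshift_ty (S c) t).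
Proof. induction t; intros; simpl; f_equal; auto.
  - rewrite later_seq_tshift, T2v, IHt; auto.
  - rewrite IHt by lia. f_equal. rewrite T1 by lia. auto. Qed.
Lemma T2'ty t : forall k c B, c <= k -> tshift_ty c (tsubst_ty k B t) = tsubst_ty (S k) (tshift_trans c B) (tshift_ty c t).
Proof. induction t; intros; simpl; f_equal; auto.
  - rewrite later_seq_tshift, T2'v, IHt; auto.
  - rewrite IHt by lia. f_equal. rewrite T1 by lia. auto. Qed.
Lemma T3ty t : forall j k A B, j <= k ->
  tsubst_ty k B (tsubst_ty j A t) = tsubst_ty j (tsubst_trans k B A) (tsubst_ty (S k) (tshift_trans j B) t).
Proof. induction t; intros; simpl.
  - reflexivity.
  - f_equal; auto.
  - rewrite !later_seq_tsubst, IHt by auto. f_equal. rewrite <- !ts_single. apply T3; auto.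
  - f_equal. rewrite IHt by lia. f_equal.
    + rewrite T2' by lia. auto.
    + rewrite T1 by lia. auto. Qed.

Lemma T1tm M : forall c d, c <= d -> tshift_tm (S d) (tshift_tm c M) = tshift_tm c (tshift_tm d M).
Proof. induction M; intros; simpl; f_equal; auto using T1ty, T1v, T1; try (apply IHM; lia). Qed.
Lemma T4tm M : forall k Y, tsubst_tm k Y (tshift_tm k M) = M.
Proof. induction M; intros; simpl; try rewrite T4v; unfold quote_seq, unquote_seq; simpl; f_equal; auto using T4ty, T4. Qed.
Lemma T2tm M : forall k c B, k <= c -> tshift_tm c (tsubst_tm k B M) = tsubst_tm k (tshift_trans c B) (tshift_tm (S c) M).
Proof. induction M; intros; simpl; f_equal; auto using T2ty, T2.
  - rewrite quote_seq_tshift, T2v, IHM; auto.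
  - rewrite unquote_seq_tshift, T2v, IHM; auto.
  - rewrite IHM by lia. f_equal. rewrite T1 by lia. auto. Qed.
Lemma T2'tm M : forall k c B, c <= k -> tshift_tm c (tsubst_tm k B M) = tsubst_tm (S k) (tshift_trans c B) (tshift_tm c M).
Proof. induction M; intros; simpl; f_equal; auto using T2'ty, T2'.
  - rewrite quote_seq_tshift, T2'v, IHM; auto.
  - rewrite unquote_seq_tshift, T2'v, IHM; auto.
  - rewrite IHM by lia. f_equal. rewrite T1 by lia. auto. Qed.
Lemma T3tm M : forall j k A B, j <= k ->
  tsubst_tm k B (tsubst_tm j A M) = tsubst_tm j (tsubst_trans k B A) (tsubst_tm (S k) (tshift_trans j B) M).
Proof. induction M; intros; simpl.
  - reflexivity.
  - f_equal; auto.
  - f_equal; auto using T3ty.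
  - rewrite !quote_seq_tsubst, IHM by auto. f_equal. rewrite <- !ts_single. apply T3; auto.
  - rewrite !unquote_seq_tsubst, IHM by auto. f_equal. rewrite <- !ts_single. apply T3; auto.
  - f_equal. rewrite IHM by lia. f_equal.
    + rewrite T2' by lia. auto.
    + rewrite T1 by lia. auto.
  - f_equal; auto using T3. Qed.
Ltac vt := repeat (match goal with
  | |- context [?a <? ?b] => destruct (Nat.ltb_spec a b)
  | |- context [?a =? ?b] => destruct (Nat.eqb_spec a b)
  end; simpl in * ); try (f_equal; lia); try lia; auto.

Lemma S1 M : forall c d, c <= d -> shift_tm (S d) (shift_tm c M) = shift_tm c (shift_tm d M).
Proof. induction M; intros; simpl; try (f_equal; auto; apply IHM; lia); try (f_equal; auto; fail).
  vt. Qed.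
Lemma S2 M : forall c d, shift_tm c (tshift_tm d M) = tshift_tm d (shift_tm c M).
Proof. induction M; intros; simpl; f_equal; auto. Qed.
Lemma S3 M : forall c k B, shift_tm c (tsubst_tm k B M) = tsubst_tm k B (shift_tm c M).
Proof. induction M; intros; simpl; f_equal; auto.
  - rewrite quote_seq_shift, IHM; auto.
  - rewrite unquote_seq_shift, IHM; auto. Qed.
Lemma S4 M : forall k c N, k <= c -> shift_tm c (subst_tm k N M) = subst_tm k (shift_tm c N) (shift_tm (S c) M).
Proof. induction M; intros; simpl.
  - vt.
  - f_equal; auto.
  - f_equal. rewrite IHM by lia. f_equal. apply S1; lia.
  - f_equal; auto.
  - f_equal; auto.
  - f_equal. rewrite IHM by lia. f_equal. apply S2.
  - f_equal; auto. Qed.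
Lemma S4' M : forall k c N, c <= k -> shift_tm c (subst_tm k N M) = subst_tm (S k) (shift_tm c N) (shift_tm c M).
Proof. induction M; intros; simpl.
  - vt.
  - f_equal; auto.
  - f_equal. rewrite IHM by lia. f_equal. apply S1; lia.
  - f_equal; auto.
  - f_equal; auto.
  - f_equal. rewrite IHM by lia. f_equal. apply S2.
  - f_equal; auto. Qed.
Lemma S5 M : forall c k N, tshift_tm c (subst_tm k N M) = subst_tm k (tshift_tm c N) (tshift_tm c M).
Proof. induction M; intros; simpl.
  - vt.
  - f_equal; auto.
  - f_equal. rewrite IHM. f_equal. symmetry; apply S2.
  - f_equal; auto.
  - f_equal; auto.
  - f_equal. rewrite IHM. f_equal. apply T1tm; lia.
  - f_equal; auto. Qed.
Lemma S6 M : forall k B j N, tsubst_tm k B (subst_tm j N M) = subst_tm j (tsubst_tm k B N) (tsubst_tm k B M).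
Proof. induction M; intros; simpl.
  - vt.
  - f_equal; auto.
  - f_equal. rewrite IHM. f_equal. symmetry; apply S3.
  - rewrite quote_seq_subst, IHM; auto.
  - rewrite unquote_seq_subst, IHM; auto.
  - f_equal. rewrite IHM. f_equal. symmetry; apply T2'tm; lia.
  - f_equal; auto. Qed.
Lemma S8 M : forall k N, subst_tm k N (shift_tm k M) = M.
Proof. induction M; intros; simpl; try (f_equal; auto; fail). vt. Qed.
Lemma S7 M : forall j k P N, j <= k ->
  subst_tm k N (subst_tm j P M) = subst_tm j (subst_tm k N P) (subst_tm (S k) (shift_tm j N) M).
Proof. induction M; intros; simpl.
  - vt. rewrite S8; auto.
  - f_equal; auto.
  - f_equal. rewrite IHM by lia. f_equal. symmetry; apply S4'; lia. f_equal. apply S1; lia.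
  - f_equal; auto.
  - f_equal; auto.
  - f_equal. rewrite IHM by lia. f_equal. symmetry; apply S5. f_equal. apply S2.
  - f_equal; auto. Qed.
Lemma S9 M : forall k N j B, subst_tm k N (tsubst_tm j B M) = tsubst_tm j B (subst_tm k (tshift_tm j N) M).
Proof. induction M; intros; simpl.
  - vt. rewrite T4tm; auto.
  - f_equal; auto.
  - f_equal. rewrite IHM. f_equal. f_equal. symmetry; apply S2.
  - rewrite quote_seq_subst, IHM; auto.
  - rewrite unquote_seq_subst, IHM; auto.
  - f_equal. rewrite IHM. f_equal. f_equal. apply T1tm; lia.
  - f_equal; auto. Qed.
Lemma par_refl M : par M M.
Proof. induction M; constructor; auto. Qed.
Lemma par_quote_seq A M N : par M N -> par (quote_seq A M) (quote_seq A N).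
Proof. intros; induction A; auto. apply par_quote; auto. Qed.
Lemma par_unquote_seq A : forall M N, par M N -> par (unquote_seq A M) (unquote_seq A N).
Proof. induction A; intros; auto. apply IHA. apply par_unquote; auto. Qed.

Lemma par_shift M N : par M N -> forall c, par (shift_tm c M) (shift_tm c N).
Proof. induction 1; intros; simpl; try (constructor; auto; fail).
  - unfold subst0. rewrite S4 by lia. apply par_beta; auto.
  - unfold tsubst0. rewrite S3. apply par_tbeta; auto.
  - rewrite unquote_seq_shift, quote_seq_shift. apply par_cancel; auto. Qed.
Lemma par_tshift M N : par M N -> forall c, par (tshift_tm c M) (tshift_tm c N).
Proof. induction 1; intros; simpl; try (constructor; auto; fail).
  - unfold subst0. rewrite S5. apply par_beta; auto.
  - unfold tsubst0. rewrite T2tm by lia. apply par_tbeta; auto.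
  - rewrite unquote_seq_tshift, quote_seq_tshift. apply par_cancel; auto. Qed.
Lemma par_subst M M' : par M M' -> forall k N N', par N N' -> par (subst_tm k N M) (subst_tm k N' M').
Proof. induction 1; intros; simpl.
  - vt; constructor.
  - constructor; auto using par_shift.
  - constructor; auto.
  - unfold subst0. rewrite S7 by lia. apply par_beta; auto using par_shift.
  - constructor; auto using par_tshift.
  - constructor; auto.
  - unfold tsubst0. rewrite S9. apply par_tbeta; auto using par_tshift.
  - constructor; auto.
  - constructor; auto.
  - rewrite unquote_seq_subst, quote_seq_subst. apply par_cancel; auto. Qed.
Lemma par_tsubst M M' : par M M' -> forall k B, par (tsubst_tm k B M) (tsubst_tm k B M').
Proof. induction 1; intros; simpl.
  - constructor.
  - constructor; auto.
  - constructor; auto.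
  - unfold subst0. rewrite S6. apply par_beta; auto.
  - constructor; auto.
  - constructor; auto.
  - unfold tsubst0. rewrite T3tm by lia. apply par_tbeta; auto.
  - apply par_quote_seq; auto.
  - apply par_unquote_seq; auto.
  - rewrite unquote_seq_tsubst, quote_seq_tsubst. apply par_cancel; auto. Qed.
Definition shp A W := unquote_seq A (quote_seq A W).
Lemma shp_nil W : shp [] W = W.
Proof. reflexivity. Qed.
Lemma shp_snoc A a W : shp (A ++ [a]) W = Unquote a (shp A (Quote a W)).
Proof. unfold shp. rewrite unquote_seq_app, quote_seq_app. reflexivity. Qed.
Lemma list_cases (A : transition) : A = [] \/ exists A' a, A = A' ++ [a].
Proof. destruct A using rev_ind; [left; auto | right; eauto]. Qed.

Lemma par_cancel' A M N : par M N -> par (shp A M) N.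
Proof. apply par_cancel. Qed.

Ltac cancel_case H E IH :=
  let Hc := fresh in
  match goal with A : transition |- _ =>
  destruct (list_cases A) as [Hc | [? [? Hc]]]; subst A;
  [ change (unquote_seq [] (quote_seq [] ?M)) with M in E; subst; eauto
  | change (unquote_seq (?A ++ [?a]) (quote_seq (?A ++ [?a]) ?M)) with (shp (A ++ [a]) M) in E;
    rewrite shp_snoc in E; try discriminate ] end.

Lemma inv_var x N : par (Var x) N -> N = Var x.
Proof. intros H; remember (Var x) as T eqn:E; induction H; try discriminate; auto.
  destruct (list_cases A) as [Hc | [A' [a Hc]]]; subst A.
  - apply IHpar; auto.
  - change (unquote_seq (A' ++ [a]) (quote_seq (A' ++ [a]) M)) with (shp (A' ++ [a]) M) in E;
    rewrite shp_snoc in E; discriminate. Qed.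
Ltac cc := match goal with
 | E : unquote_seq ?A (quote_seq ?A ?M) = _ |- _ =>
   let A' := fresh "A'" in let a := fresh "a" in let Hc := fresh "Hc" in
   destruct (list_cases A) as [Hc | [A' [a Hc]]]; subst A;
   [ change (unquote_seq [] (quote_seq [] M)) with M in E
   | change (unquote_seq (A' ++ [a]) (quote_seq (A' ++ [a]) M)) with (shp (A' ++ [a]) M) in E;
     rewrite shp_snoc in E ]
 end.

Lemma inv_lam t M N : par (Lam t M) N -> exists N', N = Lam t N' /\ par M N'.
Proof. intros H; remember (Lam t M) as T eqn:E; induction H; try discriminate.
  - injection E; intros; subst; eauto.
  - cc; [ auto | discriminate ]. Qed.
Lemma inv_tlam M N : par (TLam M) N -> exists N', N = TLam N' /\ par M N'.
Proof. intros H; remember (TLam M) as T eqn:E; induction H; try discriminate.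
  - injection E; intros; subst; eauto.
  - cc; [ auto | discriminate ]. Qed.
Lemma inv_quote a M N : par (Quote a M) N -> exists N', N = Quote a N' /\ par M N'.
Proof. intros H; remember (Quote a M) as T eqn:E; induction H; try discriminate.
  - injection E; intros; subst; eauto.
  - cc; [ auto | discriminate ]. Qed.
Lemma inv_app M1 M2 N : par (App M1 M2) N ->
  (exists N1 N2, N = App N1 N2 /\ par M1 N1 /\ par M2 N2) \/
  (exists t M11 N11 N2, M1 = Lam t M11 /\ N = subst0 N11 N2 /\ par M11 N11 /\ par M2 N2).
Proof. intros H; remember (App M1 M2) as T eqn:E; induction H; try discriminate.
  - injection E; intros; subst; left; eauto 6.
  - injection E; intros; subst; right; eauto 8.
  - cc; [ auto | discriminate ]. Qed.
Lemma inv_tapp M1 A N : par (TApp M1 A) N ->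
  (exists N1, N = TApp N1 A /\ par M1 N1) \/
  (exists M11 N11, M1 = TLam M11 /\ N = tsubst0 N11 A /\ par M11 N11).
Proof. intros H; remember (TApp M1 A) as T eqn:E; induction H; try discriminate.
  - injection E; intros; subst; left; eauto 6.
  - injection E; intros; subst; right; eauto 8.
  - cc; [ auto | discriminate ]. Qed.
Lemma inv_unq a X N : par (Unquote a X) N ->
  (exists X', N = Unquote a X' /\ par X X') \/
  (exists A M0, X = shp A (Quote a M0) /\ par M0 N).
Proof. intros H; remember (Unquote a X) as T eqn:E; induction H; try discriminate.
  - injection E; intros; subst; left; eauto 6.
  - cc; [ auto | ]. injection E; intros; subst; right; eauto 8. Qed.

Lemma shp_inj A : forall A' c c' W W', shp A (Quote c W) = shp A' (Quote c' W') -> A = A' /\ c = c' /\ W = W'.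
Proof. induction A using rev_ind; intros.
  - destruct (list_cases A') as [-> | [A0 [x ->]]].
    + injection H; intros; subst; auto.
    + rewrite shp_nil, shp_snoc in H; discriminate.
  - destruct (list_cases A') as [-> | [A0 [y ->]]].
    + rewrite shp_nil, shp_snoc in H; discriminate.
    + rewrite !shp_snoc in H. injection H; intros H1 ->.
      apply IHA in H1. destruct H1 as [-> [_ H2]]. injection H2; intros; subst; auto. Qed.

Lemma shp_par A : forall W Y, par (shp A W) Y -> exists A' W', Y = shp A' W' /\ par W W'.
Proof. induction A using rev_ind; intros.
  - exists [], Y. auto.
  - rewrite shp_snoc in H. apply inv_unq in H. destruct H as [[X' [-> HX]] | [A1 [M0 [E HM]]]].
    + apply IHA in HX. destruct HX as [A' [W'' [-> HW]]]. apply inv_quote in HW.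
      destruct HW as [W' [-> HW]]. exists (A' ++ [x]), W'. rewrite shp_snoc; auto.
    + apply shp_inj in E. destruct E as [_ [_ ->]]. exists [], Y. auto. Qed.
Fixpoint size (M : tm) : nat :=
  match M with
  | Var _ => 1
  | App M1 M2 => S (size M1 + size M2)
  | Lam _ M1 => S (size M1)
  | Quote _ M1 => S (size M1)
  | Unquote _ M1 => S (size M1)
  | TLam M1 => S (size M1)
  | TApp M1 _ => S (size M1)
  end.
Lemma size_shp A : forall W, size W <= size (shp A W).
Proof. induction A using rev_ind; intros; auto. rewrite shp_snoc. simpl.
  specialize (IHA (Quote x W)). simpl in IHA. lia. Qed.

Lemma dev_exists n : forall M, size M < n -> exists D, forall N, par M N -> par N D.
Proof. induction n; intros M Hs; [lia|].
  destruct M; simpl in Hs.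
  - exists (Var n0). intros N H. apply inv_var in H; subst; constructor.
  - destruct (classic (exists t M11, M1 = Lam t M11)) as [[t [M11 ->]] | Hn].
    + simpl in Hs. destruct (IHn M11) as [D1 HD1]; [lia|]. destruct (IHn M2) as [D2 HD2]; [lia|].
      exists (subst0 D1 D2). intros N H. apply inv_app in H.
      destruct H as [[N1 [N2 [-> [H1 H2]]]] | [t' [M' [N11 [N2 [E [-> [H1 H2]]]]]]]].
      * apply inv_lam in H1. destruct H1 as [N11 [-> H1]]. apply par_beta; auto.
      * injection E; intros; subst. apply par_subst; auto.
    + destruct (IHn M1) as [D1 HD1]; [lia|]. destruct (IHn M2) as [D2 HD2]; [lia|].
      exists (App D1 D2). intros N H. apply inv_app in H.
      destruct H as [[N1 [N2 [-> [H1 H2]]]] | [t' [M' [N11 [N2 [E _]]]]]].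
      * constructor; auto.
      * exfalso; eauto.
  - destruct (IHn M) as [D HD]; [lia|]. exists (Lam t D). intros N H.
    apply inv_lam in H. destruct H as [N' [-> H]]. constructor; auto.
  - destruct (IHn M) as [D HD]; [lia|]. exists (Quote t D). intros N H.
    apply inv_quote in H. destruct H as [N' [-> H]]. constructor; auto.
  - destruct (classic (exists A M0, M = shp A (Quote t M0))) as [[A [M0 ->]] | Hn].
    + pose proof (size_shp A (Quote t M0)) as Hz. simpl in Hz.
      destruct (IHn M0) as [D HD]; [lia|]. exists D. intros N H.
      apply inv_unq in H. destruct H as [[X' [-> HX]] | [A1 [M1 [E HM]]]].
      * apply shp_par in HX. destruct HX as [A' [W' [-> HW]]].
        apply inv_quote in HW. destruct HW as [M0' [-> HW]].
        rewrite <- shp_snoc. apply par_cancel'. auto.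
      * apply shp_inj in E. destruct E as [_ [_ ->]]. auto.
    + destruct (IHn M) as [D HD]; [lia|]. exists (Unquote t D). intros N H.
      apply inv_unq in H. destruct H as [[X' [-> HX]] | [A1 [M1 [E HM]]]].
      * constructor; auto.
      * exfalso; eauto.
  - destruct (IHn M) as [D HD]; [lia|]. exists (TLam D). intros N H.
    apply inv_tlam in H. destruct H as [N' [-> H]]. constructor; auto.
  - destruct (classic (exists M11, M = TLam M11)) as [[M11 ->] | Hn].
    + simpl in Hs. destruct (IHn M11) as [D1 HD1]; [lia|].
      exists (tsubst0 D1 t). intros N H. apply inv_tapp in H.
      destruct H as [[N1 [-> H1]] | [M' [N11 [E [-> H1]]]]].
      * apply inv_tlam in H1. destruct H1 as [N11 [-> H1]]. apply par_tbeta; auto.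
      * injection E; intros; subst. apply par_tsubst; auto.
    + destruct (IHn M) as [D1 HD1]; [lia|].
      exists (TApp D1 t). intros N H. apply inv_tapp in H.
      destruct H as [[N1 [-> H1]] | [M' [N11 [E _]]]].
      * constructor; auto.
      * exfalso; eauto.
Qed.

Theorem mainTheorem6 : forall M N1 N2 : tm,
  M ⇛ N1 -> M ⇛ N2 -> exists N : tm, N1 ⇛ N /\ N2 ⇛ N.
Proof.
  intros M N1 N2 H1 H2. destruct (dev_exists (S (size M)) M) as [D HD]; [lia|].
  exists D; split; auto.
Qed.
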